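(* For every base $b\ge 2$ there exist infinitely many $b$-wMRH numbers that are not $b$-MRH numbers.
   Context: Fix a base $b\ge 2$. $s_b(N)$ is the sum of the base-$b$ digits of $N$. For a positive integer $X$, its reversal $X^R$ is the integer whose base-$b$ representation is that of $X$ written in reverse order (leading zeros of the result are dropped). A positive integer $N$ is a $b$-wMRH number if there exists an integer $A\ge 0$ such that $N=(A+s_b(N))\cdot(A+s_b(N))^R$. A positive integer $N$ is a $b$-MRH number if there exists a positive integer $M$ such that $N=(M s_b(N))\cdot (M s_b(N))^R$. *)

(* Defs.v *)
From mathcomp Require Import all_boot.
Set Implicit Arguments. Unset Strict Implicit. Unset Printing Implicit Defensive.

(* Base-b digits of n, least significant first, with no trailing (leading) zeros;
   digits 0 = [::].  Fuel n suffices since n %/ b < n for b >= 2, n > 0. *)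
Fixpoint digits_fuel (fuel b n : nat) : seq nat :=
  match fuel with
  | 0 => [::]
  | fuel'.+1 => if n == 0 then [::] else (n %% b) :: digits_fuel fuel' b (n %/ b)
  end.

Definition digits (b n : nat) : seq nat := digits_fuel n b n.

Definition undigits (b : nat) (s : seq nat) : nat :=
  foldr (fun d acc => d + b * acc) 0 s.

Definition digsum (b n : nat) : nat := sumn (digits b n).

(* X^R: the integer whose base-b representation is that of X reversed
   (leading zeros of the result are automatically dropped). *)
Definition rev_b (b x : nat) : nat := undigits b (rev (digits b x)).

Definition wMRH (b N : nat) : Prop :=
  0 < N /\ exists A : nat, N = (A + digsum b N) * rev_b b (A + digsum b N).

Definition MRH (b N : nat) : Prop :=
  0 < N /\ exists M : nat, 0 < M /\ N = (M * digsum b N) * rev_b b (M * digsum b N).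

(* Main.v *)
Require Import Defs.
From Stdlib Require Import Arith.
From mathcomp Require Import all_boot.
From mathcomp Require Import zify.
From mathcomp Require Import cyclic.

Lemma fuel_eq b f1 : 2 <= b -> forall f2 n, n <= f1 -> n <= f2 ->
  digits_fuel f1 b n = digits_fuel f2 b n.
Proof.
move=> hb; elim: f1 => [|f1 IH] f2 n h1 h2.
  have -> : n = 0 by lia.
  by move: h2; case: f2.
move: h2; case: f2 => [|f2] h2.
  by have -> : n = 0 by lia.
rewrite /=; case: eqP => // /eqP hn.
have lt : n %/ b < n by apply: ltn_Pdiv; lia.
congr (_ :: _); apply: IH; lia.
Qed.

Lemma digits0 b : digits b 0 = [::].
Proof. by []. Qed.

Lemma digitsS b d n : 2 <= b -> d < b -> 0 < d + b * n ->
  digits b (d + b * n) = d :: digits b n.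
Proof.
move=> hb hd hpos.
rewrite /digits.
case E: (d + b * n) hpos => [|p] // _.
rewrite /= -E.
have hm : (d + b * n) %% b = d by rewrite addnC mulnC modnMDl modn_small.
have hq : (d + b * n) %/ b = n.
  by rewrite addnC mulnC divnMDl ?(divn_small hd) ?addn0 //; lia.
rewrite hm hq; congr (_ :: _); apply: fuel_eq => //; nia.
Qed.

Lemma digsumS b d n : 2 <= b -> d < b -> digsum b (d + b * n) = d + digsum b n.
Proof.
move=> hb hd.
have [h|h] : d + b * n = 0 \/ 0 < d + b * n by lia.
  have -> : d = 0 by lia.
  have -> : n = 0 by nia.
  by rewrite muln0.
by rewrite /digsum digitsS.
Qed.

Lemma digsum_pow b j c : 2 <= b -> digsum b (b ^ j * c) = digsum b c.
Proof.
move=> hb; elim: j => [|j IH]; first by rewrite expn0 mul1n.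
by rewrite expnS -mulnA -(add0n (b * _)) digsumS // ?add0n //; lia.
Qed.

Lemma digsum_small b c : 2 <= b -> c < b -> digsum b c = c.
Proof. move=> hb hc; have := @digsumS b c 0 hb hc; rewrite muln0 addn0 => -> //. Qed.

Lemma digits_pow b j c : 2 <= b -> 0 < c < b ->
  digits b (b ^ j * c) = nseq j 0 ++ [:: c].
Proof.
move=> hb /andP[c0 cb]; elim: j => [|j IH].
  rewrite expn0 mul1n; have := @digitsS b c 0 hb cb; rewrite muln0 addn0 => -> //.
rewrite expnS -mulnA -(add0n (b * _)) digitsS // ?IH //.
  - lia.
  - rewrite add0n; have : 0 < b ^ j by rewrite expn_gt0; lia.
    nia.
Qed.

Lemma undigits_cat b s1 s2 :
  undigits b (s1 ++ s2) = undigits b s1 + b ^ size s1 * undigits b s2.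
Proof.
elim: s1 => [|x s IH] /=; first by rewrite expn0 mul1n.
by rewrite IH expnS mulnDr addnA mulnA.
Qed.

Lemma undigits_nseq0 b j : undigits b (nseq j 0) = 0.
Proof. by elim: j => //= j ->; rewrite muln0. Qed.

Lemma revX b j c : 2 <= b -> 0 < c < b ->
  rev_b b (1 + b * (b ^ j * c)) = c + b ^ j.+1.
Proof.
move=> hb hc.
rewrite /rev_b digitsS // ?digits_pow //.
rewrite rev_cons rev_cat rev_nseq /= -cats1 /= undigits_cat undigits_nseq0 size_nseq /=.
by rewrite muln0 !addn0 add0n muln1 expnS.
Qed.


Lemma X_rev b j : 2 <= b -> rev_b b (1 + b*(b^j.+1*(b-1))) = (b-1) + b^j.+2.
Proof. move=> hb; rewrite (@revX b j.+1 (b-1)) //; lia. Qed.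

Lemma polyid3 b B : 3 <= b -> (1 + b*(b*B*(b-1))) * ((b-1) + b*(b*B))
  = (b-1) + b*(b*B*(2 + b*((b-2) + b*(B*(b-1))))).
Proof.
move=> hb.
have [c ->] : exists c, b = c + 3 by exists (b - 3); lia.
have -> : c + 3 - 1 = c + 2 by lia.
have -> : c + 3 - 2 = c + 1 by lia.
rewrite -!plusE -!multE. ring.
Qed.

Lemma ds3 b j : 3 <= b ->
  digsum b ((1 + b*(b^j.+1*(b-1))) * ((b-1) + b^j.+2)) = 3*b-2.
Proof.
move=> hb; rewrite !expnS polyid3 // digsumS; try lia.
rewrite -expnS digsum_pow; try lia.
rewrite digsumS; try lia.
rewrite digsumS; try lia.
rewrite digsum_pow; try lia.
rewrite digsum_small; lia.
Qed.

Lemma ds2 j : digsum 2 ((1 + 2*(2^j.+1*(2-1))) * ((2-1) + 2^j.+2)) = 3.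
Proof.
have -> : (1 + 2*(2^j.+1*(2-1))) * ((2-1) + 2^j.+2)
  = 1 + 2 * (2^j.+2 * (1 + 2 * (2^j * 1))).
  rewrite !expnS; set B := 2 ^ j.
  have -> : 2 - 1 = 1 by [].
  rewrite -!plusE -!multE. ring.
rewrite digsumS // digsum_pow // digsumS // digsum_pow //.
Qed.

Lemma good b j m : 2 <= b -> m <= j ->
  let X := 1 + b*(b^j.+1*(b-1)) in
  let N := X * ((b-1) + b^j.+2) in
  digsum b N <= X -> ~ (digsum b N %| N) ->
  exists N, m < N /\ wMRH b N /\ ~ MRH b N.
Proof.
move=> hb hmj X N hsX hnd.
have hXb : b ^ j.+1 <= X.
  rewrite /X; have : 0 < b ^ j.+1 by rewrite expn_gt0; lia.
  nia.
have hjX : j.+1 < b ^ j.+1 by apply: ltn_expl.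
have hXN : X <= N by rewrite /N; nia.
exists N; split; first by lia.
split.
  split; first by lia.
  exists (X - digsum b N); rewrite subnK // X_rev //.
case=> _ [M [_ HN]].
apply: hnd.
move: HN; set s := digsum b N => HN.
rewrite HN; apply: dvdn_mulr; apply: dvdn_mull; exact: dvdnn.
Qed.

Lemma modcase b m s : 2 <= b -> 1 < s -> coprime b s ->
  (forall j, digsum b ((1 + b*(b^j.+1*(b-1))) * ((b-1) + b^j.+2)) = s) ->
  (forall j, s <= 1 + b*(b^j.+1*(b-1))) ->
  exists N, m < N /\ wMRH b N /\ ~ MRH b N.
Proof.
move=> hb hs hcop hds hsX.
have hphi : 0 < totient s by rewrite totient_gt0; lia.
pose j := totient s * (m + 2) - 2.
have hj : j.+2 = totient s * (m + 2) by rewrite /j; nia.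
apply: (@good b j m) => //; first by rewrite /j; nia.
  by rewrite hds.
rewrite hds.
set T := b ^ j.+2.
have hT : T %% s = 1.
  rewrite /T hj expnM -modnXm Euler_exp_totient // modnXm exp1n modn_small //.
have hX : 1 + b * (b ^ j.+1 * (b - 1)) = 1 + (b-1) * T.
  by rewrite /T (expnS b j.+1); congr (1 + _); rewrite -!multE; ring.
rewrite hX.
have hTq : T = T %/ s * s + 1 by rewrite {1}(divn_eq T s) hT.
move: hTq; set q := T %/ s => hTq; rewrite hTq.
have [c hc] : exists c, b = c + 1 by exists (b - 1); lia.
have hc1 : b - 1 = c by lia.
rewrite hc1.
have -> : (1 + c * (q * s + 1)) * (c + (q * s + 1))
   = b * b + s * (q * b + c * q * b + c * q * q * s).
  rewrite hc -!plusE -!multE; ring.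
rewrite dvdn_addl; last by apply: dvdn_mulr.
move=> hd.
have : coprime s (b * b) by rewrite coprimeMr coprime_sym hcop.
rewrite /coprime; move/gcdn_idPl: hd => ->; lia.
Qed.

Lemma evencase b m : 4 <= b -> 2 %| b ->
  exists N, m < N /\ wMRH b N /\ ~ MRH b N.
Proof.
move=> hb /dvdnP [e he].
apply: (@good b m m) => //; first by lia.
  rewrite ds3; last by lia.
  have : b <= b ^ m.+1 by rewrite -{1}(expn1 b) leq_exp2l //; lia.
  nia.
rewrite ds3; last by lia.
set P := b ^ m.+1.
rewrite (expnS b m.+1) -/P.
have -> : (1 + b * (P * (b - 1))) * (b - 1 + b * P)
   = 2 * ((e * (P * (b-1))) * (b - 1 + b * P) + (e - 1 + e * P)) + 1.
  have [f hf] : exists f, e = f + 2 by exists (e - 2); lia.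
  rewrite he hf.
  have -> : (f + 2) * 2 - 1 = 2 * f + 3 by lia.
  have -> : f + 2 - 1 = f + 1 by lia.
  rewrite -!plusE -!multE; ring.
move=> hd.
have h2 : 2 %| 3 * b - 2 by apply/dvdnP; exists (3 * e - 1); lia.
have := dvdn_trans h2 hd.
rewrite dvdn_addr; last by apply: dvdn_mulr.
by [].
Qed.

Theorem mainTheorem15 (b : nat) (hb : 2 <= b) :
  forall m : nat, exists N : nat, m < N /\ wMRH b N /\ ~ MRH b N.
Proof.
move=> m.
case: (boolP (b == 2)) => [/eqP b2 | bn2].
  subst b; apply: (@modcase 2 m 3) => //.
    by move=> j; rewrite ds2.
  move=> j; have : 0 < 2 ^ j.+1 by rewrite expn_gt0.
  lia.
case: (boolP (odd b)) => hodd.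
  apply: (@modcase b m (3 * b - 2)) => //; first by lia.
  - have hg0 : 0 < gcdn b (3 * b - 2) by rewrite gcdn_gt0; apply/orP; left; lia.
    have hg2 : gcdn b (3 * b - 2) %| 2.
      have e2 : 3 * b - (3 * b - 2) = 2 by lia.
      rewrite -[X in _ %| X]e2.
      apply: dvdn_sub; first by apply: dvdn_mull; exact: dvdn_gcdl.
      exact: dvdn_gcdr.
    have := dvdn_leq (isT : 0 < 2) hg2.
    rewrite /coprime.
    case E: (gcdn b (3 * b - 2)) hg0 => [|[|[|g]]] //= _ _.
    have : 2 %| b by rewrite -E dvdn_gcdl.
    by rewrite dvdn2 hodd.
  - by move=> j; rewrite ds3 //; lia.
  - move=> j; have : b <= b ^ j.+1 by rewrite -{1}(expn1 b) leq_exp2l //; lia.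
    nia.
apply: evencase; last by rewrite dvdn2 hodd.
have : b != 3 by apply/eqP => h; rewrite h in hodd.
lia.
Qed.
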